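(* Let $N\geq 2$ and let $p(\theta)=a_0+\sum_{k=1}^{N}(a_k\cos k\theta+b_k\sin k\theta)$ be a real trigonometric polynomial of degree $N$ (so $a_N\neq 0$ or $b_N\neq 0$). Let $\gamma(\theta)=\big(p(\theta)\cos\theta-p'(\theta)\sin\theta,\ p(\theta)\sin\theta+p'(\theta)\cos\theta\big)$ for $\theta\in\,]-\pi,\pi[$, let $\mathcal{C}$ be the curve it describes, and let $\mathcal{P}(t)=\gamma(2\arctan t)$, $t\in\mathbb{R}$. Let $q$ be the number of times $\gamma$ traces $\mathcal{C}$, i.e. the positive integer such that for all but finitely many $t\in\mathbb{R}$ the set $\{s\in\mathbb{R}:\mathcal{P}(s)=\mathcal{P}(t)\}$ has exactly $q$ elements. (i) If some coefficient of even index is nonzero, i.e. $a_{2k}\neq 0$ for some integer $k$ with $0\le 2k\le N$, or $b_{2k}\neq 0$ for some integer $k$ with $2\le 2k\le N$, then $q=1$. (ii) If $a_{2k}=0$ and $b_{2k}=0$ for all integers $k$ with $0\leq 2k\leq N$ (with $b_0:=0$), then $q=2$.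
   Context: The map $\theta\mapsto\tan(\theta/2)$ is a bijection $]-\pi,\pi[\to\mathbb{R}$, so $\mathcal{P}$ is a rational parametrization of $\mathcal{C}$. *)

(* Defs.v *)
From Stdlib Require Import Reals Lra List.
From Coquelicot Require Import Coquelicot.
Open Scope R_scope.

Definition trig_poly (N : nat) (a b : nat -> R) (th : R) : R :=
  a 0%nat + sum_f 1 N (fun k => a k * cos (INR k * th) + b k * sin (INR k * th)).

Definition gamma_curve (N : nat) (a b : nat -> R) (th : R) : R * R :=
  let p := trig_poly N a b in
  (p th * cos th - Derive p th * sin th,
   p th * sin th + Derive p th * cos th).

Definition Pcurve (N : nat) (a b : nat -> R) (t : R) : R * R :=
  gamma_curve N a b (2 * atan t).

Definition has_card (S : R -> Prop) (n : nat) : Prop :=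
  exists l : list R, NoDup l /\ length l = n /\ (forall s, S s <-> In s l).

Definition traces_times (N : nat) (a b : nat -> R) (q : nat) : Prop :=
  (0 < q)%nat /\
  exists E : list R, forall t, ~ In t E ->
    has_card (fun s => Pcurve N a b s = Pcurve N a b t) q.

(* Main.v *)
Require Import Defs.
From Stdlib Require Import Reals List Lra.
From Coquelicot Require Import Coquelicot.
From mathcomp Require Import ssreflect ssrbool ssrfun eqtype ssrnat.

Section TrigDeriv.
Open Scope R_scope.

Lemma is_derive_sumR (m : nat) (f : nat -> R -> R) (df : nat -> R) (x : R) :
  (forall k, is_derive (f k) x (df k)) ->
  is_derive (fun y => sum_f_R0 (fun k => f k y) m) x (sum_f_R0 df m).
Proof.
move=> h; elim: m => [|m IH] /=; first exact: h.
exact: is_derive_plus.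
Qed.

Definition dtrig (N : nat) (a b : nat -> R) (th : R) : R :=
  sum_f 1 N (fun k => INR k * (b k * cos (INR k * th) - a k * sin (INR k * th))).

Lemma is_derive_trig N a b th : is_derive (trig_poly N a b) th (dtrig N a b th).
Proof.
rewrite /dtrig /sum_f.
apply: (is_derive_ext (fun y => a 0%nat + sum_f_R0 (fun k =>
   (fun k y => a (k + 1)%coq_nat * cos (INR (k + 1)%coq_nat * y) + b (k + 1)%coq_nat * sin (INR (k + 1)%coq_nat * y)) k y) (N - 1)%coq_nat)).
  by move=> t; rewrite /trig_poly /sum_f.
rewrite -[X in is_derive _ _ X]Rplus_0_l.
apply: is_derive_plus; first exact: is_derive_const.
apply: is_derive_sumR => k.
auto_derive; first by [].
ring.
Qed.

Lemma Derive_trig N a b th : Derive (trig_poly N a b) th = dtrig N a b th.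
Proof. exact: is_derive_unique (is_derive_trig N a b th). Qed.
End TrigDeriv.
Section AtanFacts.
Open Scope R_scope.

Lemma one_plus_sq_pos t : 0 < 1 + t * t.
Proof. nra. Qed.

Lemma cos2atan t : cos (2 * atan t) = (1 - t * t) / (1 + t * t).
Proof.
rewrite cos_2a cos_atan sin_atan.
have h := one_plus_sq_pos t.
have hs : sqrt (1 + t²) * sqrt (1 + t²) = 1 + t * t.
  by rewrite sqrt_sqrt; rewrite /Rsqr; lra.
have hs0 : sqrt (1 + t²) <> 0 by move=> e; rewrite e in hs; lra.
field_simplify; [|lra|exact: hs0].
rewrite /Rsqr. replace (sqrt (1 + t * t) ^ 2) with (1 + t * t).
  by field; lra.
by rewrite /= Rmult_1_r; rewrite /Rsqr in hs; rewrite hs.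
Qed.

Lemma sin2atan t : sin (2 * atan t) = 2 * t / (1 + t * t).
Proof.
rewrite sin_2a cos_atan sin_atan.
have h := one_plus_sq_pos t.
have hs : sqrt (1 + t²) * sqrt (1 + t²) = 1 + t * t.
  by rewrite sqrt_sqrt; rewrite /Rsqr; lra.
have hs0 : sqrt (1 + t²) <> 0 by move=> e; rewrite e in hs; lra.
rewrite /Rsqr in hs hs0 *.
replace (2 * (t / sqrt (1 + t * t)) * (1 / sqrt (1 + t * t))) with (2 * t / (sqrt (1 + t * t) * sqrt (1 + t * t))).
  by rewrite hs.
by field.
Qed.

Lemma onepcos_pos t : 0 < 1 + cos (2 * atan t).
Proof.
rewrite cos2atan; have h := one_plus_sq_pos t.
replace (1 + (1 - t * t) / (1 + t * t)) with (2 / (1 + t * t)) by (field; lra).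
apply: Rdiv_lt_0_compat; lra.
Qed.

Lemma inv_formula t : sin (2 * atan t) / (1 + cos (2 * atan t)) = t.
Proof.
rewrite sin2atan cos2atan; have h := one_plus_sq_pos t.
field; split; first lra.
replace (1 + t * t + (1 - t * t)) with 2 by ring; lra.
Qed.

Lemma neg_cos t : t <> 0 -> cos (2 * atan (- / t)) = - cos (2 * atan t).
Proof.
move=> t0; rewrite !cos2atan; have h := one_plus_sq_pos t.
have h2 : 1 + - / t * - / t <> 0 by have := one_plus_sq_pos (- / t); lra.
field; split => //; lra.
Qed.

Lemma neg_sin t : t <> 0 -> sin (2 * atan (- / t)) = - sin (2 * atan t).
Proof.
move=> t0; rewrite !sin2atan; have h := one_plus_sq_pos t.
have h2 : 1 + - / t * - / t <> 0 by have := one_plus_sq_pos (- / t); lra.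
field; split => //; lra.
Qed.

Lemma eq_from_cs s t : cos (2 * atan s) = cos (2 * atan t) ->
  sin (2 * atan s) = sin (2 * atan t) -> s = t.
Proof. by move=> hc hs; rewrite -(inv_formula s) -(inv_formula t) hc hs. Qed.

Lemma neg_from_cs s t : cos (2 * atan s) = - cos (2 * atan t) ->
  sin (2 * atan s) = - sin (2 * atan t) -> t <> 0 /\ s = - / t.
Proof.
move=> hc hs.
have ht : t <> 0.
  move=> t0; move: hc; rewrite t0 atan_0 Rmult_0_r cos_0 => hc.
  have := onepcos_pos s; lra.
split => //; apply: eq_from_cs; by rewrite ?neg_cos ?neg_sin.
Qed.
Lemma t_neq_neginv t : t <> 0 -> - / t <> t.
Proof.
move=> t0 e.
have h : t * t = -1 by rewrite -{1}e; field.
nra.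
Qed.

Definition th_of (t : R) : R := 2 * atan t.
End AtanFacts.

From HB Require Import structures.
From mathcomp Require Import all_boot all_order all_algebra.
From mathcomp Require Import ring zify.
From mathcomp Require Import Rstruct.
From mathcomp Require Import complex.
Import Order.TTheory GRing.Theory Num.Theory.
Set Implicit Arguments.
Unset Strict Implicit.
Unset Printing Implicit Defensive.
Local Open Scope ring_scope.

Section Core.
Variable K : numClosedFieldType.
Local Notation PK := {poly K}.
Local Notation PP := {poly {poly K}}.
Definition Dz (P : PP) : PP := map_poly (@deriv K) P.

Lemma DzD (p q : PP) : Dz (p + q) = Dz p + Dz q.
Proof. by apply/polyP=> i; rewrite /Dz coefD !coef_map_id0 ?deriv0 // coefD derivD. Qed.
Lemma DzN (p : PP) : Dz (- p) = - Dz p.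
Proof. by apply/polyP=> i; rewrite /Dz coefN !coef_map_id0 ?deriv0 // coefN derivN. Qed.
Lemma DzB (p q : PP) : Dz (p - q) = Dz p - Dz q.
Proof. by rewrite DzD DzN. Qed.
Lemma DzC (c : PK) : Dz c%:P = (deriv c)%:P.
Proof. by rewrite /Dz map_polyC. Qed.
Lemma DzM (p q : PP) : Dz (p * q) = Dz p * q + p * Dz q.
Proof.
apply/polyP=> i; rewrite /Dz coefD !coef_map_id0 ?deriv0 // !coefM.
rewrite (@raddf_sum _ _ (@deriv K)) -big_split /=; apply: eq_bigr => j _.
by rewrite derivM !coef_map_id0 ?deriv0 // addrC.
Qed.
Lemma DzX : Dz 'X = 0.
Proof. by apply/polyP=> i; rewrite /Dz coef_map_id0 ?deriv0 // coefX coef0; case: (i == 1)%N; rewrite ?derivC ?deriv0. Qed.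
Lemma DzXn n : Dz ('X^n) = 0.
Proof. elim: n => [|n IH]; first by rewrite expr0 -polyC1 DzC derivC.
by rewrite exprS DzM DzX IH mul0r mulr0 addr0. Qed.
Lemma Dzliftw (p : PK) : Dz (p^:P) = 0.
Proof. by apply/polyP=> i; rewrite /Dz coef_map_id0 ?deriv0 // coef_map /= derivC coef0. Qed.
End Core.
Section Core2.
Variable K : numClosedFieldType.
Local Notation PK := {poly K}.
Local Notation PP := {poly {poly K}}.

Lemma ring_aux (R : comNzRingType) (e e' F DF dF A DA dA H DH dH : R) :
  e * F = A * H -> e' * F + e * DF = DA * H + A * DH -> e * dF = dA * H + A * dH ->
  e ^+ 2 * (DF * dH - dF * DH) = H * (e * (DA * dH - dA * DH) - e' * A * dH).
Proof.
move=> h3 h1 h2; apply/eqP; rewrite -subr_eq0.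
have -> : e ^+ 2 * (DF * dH - dF * DH) - H * (e * (DA * dH - dA * DH) - e' * A * dH)
  = e * dH * ((e' * F + e * DF) - (DA * H + A * DH)) - e * DH * (e * dF - (dA * H + A * dH))
    - e' * dH * (e * F - A * H) by ring.
by rewrite h1 h2 h3 !subrr !mulr0 subrr subr0.
Qed.

Lemma deriv_dvd (H F : PP) : H %| F -> H %| (Dz F * deriv H - deriv F * Dz H).
Proof.
case/Pdiv.Idomain.dvdpP=> [[c A]] /= c0 hF.
rewrite -mul_polyC in hF.
have h1 := congr1 (@Dz K) hF; rewrite !DzM DzC in h1.
have h2 := congr1 (@deriv _) hF; rewrite !derivM derivC mul0r add0r in h2.
have := ring_aux hF h1 h2 => eq.
rewrite -(@dvdpZr _ (c ^+ 2)) ?expf_neq0 // -mul_polyC rmorphXn /= eq.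
exact: dvdp_mulIl.
Qed.
End Core2.
Section Ident.
Variable K : numClosedFieldType.
Local Notation PK := {poly K}.
Local Notation PP := {poly {poly K}}.

Definition Fg (k : nat) (U : PK) : PP := ('X^k : PK)%:P * (U^:P) - 'X^k * U%:P.
Definition Tg (k : nat) (U : PK) : PK := 'X * U^`() - k%:R * U.

Lemma X_derivXn (R : comNzRingType) k : 'X * ('X^k)^`() = k%:R * 'X^k :> {poly R}.
Proof. rewrite derivXn; case: k => [|k]; first by rewrite !mulr0n mulr0 mul0r.
by rewrite mulrnAr -exprS mulr_natl. Qed.

Lemma Fg_Dz k U : ('X)%:P * Dz (Fg k U) = k%:R * Fg k U - 'X^k * (Tg k U)%:P.
Proof.
rewrite /Fg /Tg DzB !DzM !DzC Dzliftw DzXn mulr0 addr0 mul0r add0r.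
have E : ('X : PK)%:P * (('X^k)^`())%:P = (k%:R * 'X^k : PK)%:P by rewrite -rmorphM /= X_derivXn.
rewrite mulrBr mulrA E.
rewrite rmorphB /= !rmorphM /= !rmorph_nat.
ring.
Qed.

Lemma Fg_dw k U : 'X * deriv (Fg k U) = ('X^k : PK)%:P * (Tg k U)^:P + k%:R * Fg k U.
Proof.
rewrite /Fg /Tg derivB !derivM !derivC deriv_map /= mul0r add0r mulr0 addr0.
have E : ('X : PP) * ('X^k)^`() = k%:R * 'X^k by rewrite X_derivXn.
rewrite rmorphB /= !rmorphM /= rmorph_nat map_polyX.
rewrite mulrBr (mulrA 'X (('X^k)^`())) E.
ring.
Qed.
End Ident.
Section MainCore.
Variable K : numClosedFieldType.
Local Notation PK := {poly K}.
Local Notation PP := {poly {poly K}}.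

Lemma deriv_neq0 (H : PP) : (1 < size H)%N -> deriv H != 0.
Proof.
move=> hs; apply/eqP => /(congr1 (fun p : PP => p`_(size H).-2)).
rewrite coef_deriv coef0 prednK; last by rewrite -ltnS prednK // ltnW.
move/eqP; rewrite -mulr_natr mulf_eq0 -polyC_natr polyC_eq0 pnatr_eq0.
have hl : H`_(size H).-1 != 0 by rewrite -lead_coefE lead_coef_eq0 -size_poly_gt0 ltnW.
by rewrite (negbTE hl) /=; case: (size H) hs => [|[|m]].
Qed.

Variables (n : nat) (U V : PK) (Q G1 G2 : PP).
Hypothesis hTV : Tg (n + 2) V = - Tg n U.
Hypothesis hT0 : Tg n U != 0.
Hypothesis hF1 : Fg n U = Q * G1.
Hypothesis hF2 : Fg (n + 2) V = Q * G2.
Hypothesis hGX : G1.[('X : PK)] != 0.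
Hypothesis hGN : G1.[- ('X : PK)] != 0.
Hypothesis hFr : forall r : K, (Fg n U).[r%:P] != 0.

Theorem core_resultant : resultant G1 G2 != 0.
Proof.
set T := Tg n U; set F1 := Fg n U; set F2 := Fg (n + 2) V.
set Z : PP := ('X : PK)%:P.
have I1 : Z * Dz F1 = n%:R * F1 - 'X^n * T%:P by exact: Fg_Dz.
have I2 : 'X * deriv F1 = ('X^n : PK)%:P * T^:P + n%:R * F1 by exact: Fg_dw.
have I3 : Z * Dz F2 = (n + 2)%:R * F2 - 'X^(n + 2) * (- T)%:P.
  by rewrite /F2 Fg_Dz hTV.
have I4 : 'X * deriv F2 = ('X^(n + 2) : PK)%:P * (- T)^:P + (n + 2)%:R * F2.
  by rewrite /F2 Fg_dw hTV.
apply/negP; rewrite resultant_eq0 => hg.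
suff: forall k (H : PP), size H = k -> (1 < size H)%N -> H %| G1 -> H %| G2 -> False.
  by move=> /(_ _ (gcdp G1 G2) erefl hg); apply; [exact: dvdp_gcdl | exact: dvdp_gcdr].
elim/ltn_ind => k IH H hk hs h1 h2.
have H0 : H != 0 by rewrite -size_poly_gt0 ltnW.
have prime : forall A B, H %| A * B -> (H %| A) || (H %| B).
  move=> A B hAB; have [cop|ncop] := boolP (coprimep H A).
    by rewrite (Gauss_dvdpr _ cop) in hAB; rewrite hAB orbT.
  set g := gcdp H A.
  have gH : g %| H := dvdp_gcdl H A.
  have g0 : g != 0 by rewrite gcdp_eq0 negb_and H0.
  have sg : (1 < size g)%N.
    move: ncop; rewrite /coprimep -/g; move: g0; rewrite -size_poly_eq0.
    by case: (size g) => [|[|m]].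
  have [lt|ge] := ltnP (size g) k.
    by case: (IH _ lt g erefl sg (dvdp_trans gH h1) (dvdp_trans gH h2)).
  have e : g %= H by rewrite -dvdp_size_eqp // eqn_leq dvdp_leq //= hk ge.
  by rewrite -(eqp_dvdl _ e) dvdp_gcdr.
have lin : forall c : PK, H %| 'X - c%:P -> root G1 c.
  move=> c hc; have s2 := dvdp_leq (negbT (polyXsubC_eq0 c)) hc.
  rewrite size_XsubC in s2.
  have e : H %= 'X - c%:P by rewrite -dvdp_size_eqp // size_XsubC eqn_leq s2.
  by rewrite -dvdp_XsubCl -(eqp_dvdl _ e).
have p1 : H %| F1 by rewrite /F1 hF1 dvdp_mull.
have p2 : H %| F2 by rewrite /F2 hF2 dvdp_mull.
have X1 := deriv_dvd p1; have X2 := deriv_dvd p2.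
have hW : H %| deriv H * (Dz F1 * deriv F2 - Dz F2 * deriv F1).
  have -> : deriv H * (Dz F1 * deriv F2 - Dz F2 * deriv F1) =
     deriv F2 * (Dz F1 * deriv H - deriv F1 * Dz H)
   - deriv F1 * (Dz F2 * deriv H - deriv F2 * Dz H) by ring.
  by rewrite dvdp_sub // dvdp_mull.
case/orP: (prime _ _ hW) => [hd|{}hW].
  have := dvdp_leq (deriv_neq0 hs) hd; rewrite leqNgt.
  by rewrite lt_size_deriv.
have hmain : H %| ('X^n * T : PK)%:P * ('X^n * T : PK)^:P * (Z - 'X) * (Z + 'X).
  have e : Z * 'X * (Dz F1 * deriv F2 - Dz F2 * deriv F1) =
      ('X^n * T : PK)%:P * ('X^n * T : PK)^:P * (Z - 'X) * (Z + 'X)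
      + F1 * (- n%:R * (('X^(n + 2) : PK)%:P * T^:P + 'X^(n + 2) * T%:P))
      + F2 * (- (n + 2)%:R * ('X^n * T%:P + ('X^n : PK)%:P * T^:P)).
    have -> : Z * 'X * (Dz F1 * deriv F2 - Dz F2 * deriv F1) =
      (Z * Dz F1) * ('X * deriv F2) - (Z * Dz F2) * ('X * deriv F1) by ring.
    rewrite I1 I2 I3 I4 !rmorphM /= !rmorphN /= map_polyXn !exprD !rmorphM /= .
    rewrite /Z; ring.
  have : H %| Z * 'X * (Dz F1 * deriv F2 - Dz F2 * deriv F1) by rewrite dvdp_mull.
  by rewrite e dvdp_addl ?dvdp_addl // dvdp_mulr.
have XT0 : ('X^n * T : PK) != 0 by rewrite mulf_neq0 // monic_neq0 // monicXn.
case/orP: (prime _ _ hmain) => [/prime/orP [/prime/orP [hA|hB] | hC] | hD].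
- have := dvdp_leq _ hA; rewrite polyC_eq0 => /(_ XT0) hl.
  by move: (leq_trans hl (size_polyC_leq1 _)); rewrite leqNgt hs.
- move: hB; have [r ->] := closed_field_poly_normal ('X^n * T).
  rewrite map_polyZ /= dvdpZr; last by rewrite polyC_eq0 lead_coef_eq0.
  rewrite map_prod_XsubC.
  elim: r => [|z r IHr].
    rewrite big_nil => h; have := dvdp_leq (oner_neq0 _) h.
    by rewrite size_poly1 leqNgt hs.
  rewrite big_cons => /prime/orP [/lin hz | //].
  have : root F1 z%:P by rewrite /F1 hF1 rootM hz orbT.
  by rewrite /root (negbTE (hFr z)).
- move: hC; rewrite -opprB dvdpNr => /lin; by rewrite /root (negbTE hGX).
- have e : Z + 'X = 'X - (- ('X : PK))%:P by rewrite rmorphN /= opprK addrC.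
  by move: hD; rewrite e => /lin; rewrite /root (negbTE hGN).
Qed.
End MainCore.
Section Spec.
Variable K : numClosedFieldType.
Local Notation PK := {poly K}.
Local Notation PP := {poly {poly K}}.

Lemma liftw_horner (p q : PK) : (p^:P).[q] = p \Po q.
Proof. by []. Qed.

Lemma coef_Tg k (p : PK) j : (Tg k p)`_j = (j%:R - k%:R) * p`_j.
Proof.
rewrite /Tg coefB coefXM coef_deriv -polyC_natr coefCM.
case: j => [|j] /=; first by rewrite mulrBl mul0r.
by rewrite mulrBl !mulr_natl.
Qed.

Lemma size_gt_coef (p : PK) i : p`_i != 0 -> (i < size p)%N.
Proof. move=> h; rewrite ltnNge; apply/negP => /(nth_default 0) e; by rewrite e eqxx in h. Qed.

Lemma size_gt_coefP (p : PP) i : p`_i != 0 -> (i < size p)%N.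
Proof. move=> h; rewrite ltnNge; apply/negP => /(nth_default 0) e; by rewrite e eqxx in h. Qed.

Lemma compN_coef (p : PK) i : (p \Po (- 'X))`_i = (-1) ^+ i * p`_i.
Proof.
rewrite comp_polyE coef_sum.
rewrite (eq_bigr (fun j : 'I_(size p) => if (j == i :> nat) then (-1) ^+ i * p`_i else 0)).
  case: (ltnP i (size p)) => hi.
    rewrite (bigD1 (Ordinal hi)) //= eqxx big1 ?addr0 // => j /negbTE.
    by rewrite -val_eqE /= => ->.
  rewrite big1 ?(nth_default _ hi) ?mulr0 // => j _.
  by case: eqP => // hj; rewrite -hj in hi; move: (ltn_ord j); rewrite ltnNge hi.
move=> j _; rewrite -scaleN1r exprZn !coefZ coefXn eq_sym.
by case: eqP => [->|_]; rewrite ?mulr1 ?mulr0 // mulrC.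
Qed.

Variables (n : nat) (cc : nat -> K).
Hypothesis hn : (1 <= n)%N.
Hypothesis c0 : cc 0%N != 0.
Hypothesis ctop : cc (2 * n + 2)%N != 0.

Definition Up : PK := \poly_(j < 2 * n + 3) (((n + 2)%:R - j%:R) * cc j).
Definition Vp : PK := \poly_(j < 2 * n + 3) ((j%:R - n%:R) * cc j).

Lemma TV : Tg (n + 2) Vp = - Tg n Up.
Proof.
apply/polyP => j; rewrite coefN !coef_Tg /Up /Vp !coef_poly.
case: ifP => _; last by rewrite !mulr0 oppr0.
ring.
Qed.

Lemma T0 : Tg n Up != 0.
Proof.
apply/eqP => /(congr1 (fun p : PK => p`_(2 * n + 2))).
rewrite coef_Tg coef0 /Up coef_poly ifT; last lia.
move/eqP; rewrite !mulf_eq0 (negbTE ctop) orbF !subr_eq0 !eqr_nat.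
by apply/negP; rewrite negb_or; apply/andP; split; apply/eqP; lia.
Qed.

Lemma Ucoef_top : Up`_(2 * n + 2) != 0.
Proof.
rewrite /Up coef_poly ifT; last lia.
by rewrite mulf_neq0 // subr_eq0 eqr_nat; apply/eqP; lia.
Qed.

Lemma Vcoef_top : Vp`_(2 * n + 2) != 0.
Proof.
rewrite /Vp coef_poly ifT; last lia.
by rewrite mulf_neq0 // subr_eq0 eqr_nat; apply/eqP; lia.
Qed.

Lemma Ucoef0 : Up`_0 != 0.
Proof.
rewrite /Up coef_poly ifT; last lia.
by rewrite mulf_neq0 // subr_eq0 eqr_nat; apply/eqP; lia.
Qed.

Lemma Fr (r : K) : (Fg n Up).[r%:P] != 0.
Proof.
rewrite /Fg !hornerE liftw_horner comp_polyCr.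
have [->|r0] := eqVneq r 0.
  rewrite expr0n; case: n hn => // m _; rewrite mul0r subr0 mulf_eq0 negb_or.
  rewrite -size_poly_eq0 size_polyXn /= polyC_eq0 horner_coef0.
  exact: Ucoef0.
apply/eqP => /(congr1 (fun p : PK => p`_(2 * n + 2))).
rewrite coef0 coefB coefXnM ifF; last lia.
rewrite -rmorphXn coefCM (_ : (2 * n + 2 - n)%N = (n + 2)%N); last lia.
rewrite coefC ifF; last lia.
rewrite sub0r => /eqP; rewrite oppr_eq0 mulf_eq0 (negbTE (expf_neq0 _ r0)).
by rewrite (negbTE Ucoef_top).
Qed.
End Spec.
Section Exc.
Variable K : numClosedFieldType.
Local Notation PK := {poly K}.
Local Notation PP := {poly {poly K}}.

Lemma eval_deriv_factor (F G : PP) (c : PK) : F = G * ('X - c%:P) -> (deriv F).[c] = G.[c].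
Proof.
move=> ->; rewrite derivM derivB derivX derivC subr0 !hornerE subrr mulr0 add0r.
by [].
Qed.

Lemma I2eval k (U : PK) (c : PK) :
  c * (deriv (Fg k U)).[c] = 'X^k * (Tg k U \Po c) + k%:R * (Fg k U).[c].
Proof.
have := congr1 (fun P : PP => P.[c]) (Fg_dw k U); rewrite /= -!polyC_natr !hornerE.
by rewrite liftw_horner.
Qed.

Lemma FgX k (U : PK) : (Fg k U).[('X : PK)] = 0.
Proof. by rewrite /Fg !hornerE liftw_horner comp_polyXr subrr. Qed.

Lemma evalF k (U : PK) (z0 w0 : K) :
  (map_poly (horner_eval z0) (Fg k U)).[w0] = z0 ^+ k * U.[w0] - w0 ^+ k * U.[z0].
Proof.
rewrite /Fg rmorphB !rmorphM /= map_polyC map_polyXn /= horner_evalE hornerXn.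
rewrite -map_poly_comp.
have -> : map_poly (horner_eval z0 \o polyC) U = U.
  by rewrite (eq_map_poly (g := id)) ?map_poly_id // => x /=; rewrite horner_evalE hornerC.
by rewrite map_polyC /= horner_evalE !hornerE.
Qed.

Lemma sizeF_gt k (U : PK) d : (k < d)%N -> U`_d != 0 -> (d < size (Fg k U))%N.
Proof.
move=> hkd hU; apply: size_gt_coefP.
rewrite /Fg coefB coefCM coef_map /= coefXnM ifF; last by apply/negbTE; rewrite -leqNgt ltnW.
rewrite coefC ifF; last by apply/negbTE; rewrite subn_eq0 -ltnNge.
by rewrite subr0 mulf_neq0 // ?polyC_eq0 // monic_neq0 // monicXn.
Qed.
End Exc.
Section Cases.
Variable K : numClosedFieldType.
Local Notation PK := {poly K}.
Local Notation PP := {poly {poly K}}.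
Variables (n : nat) (cc : nat -> K).
Hypothesis hn : (1 <= n)%N.
Hypothesis c0 : cc 0%N != 0.
Hypothesis ctop : cc (2 * n + 2)%N != 0.

Local Notation U := (Up n cc).
Local Notation V := (Vp n cc).

Lemma sizeG_gt1 k (W : PK) (Q G : PP) : (3 < size (Fg k W))%N -> (size Q <= 3)%N ->
  Fg k W = Q * G -> (1 < size G)%N.
Proof.
move=> hF hQ e; rewrite ltnNge; apply/negP => hG.
have := size_polyMleq Q G; rewrite -e => h.
have : (size (Fg k W) <= 3)%N by apply: (leq_trans h); rewrite -subn1 leq_subLR; lia.
by rewrite leqNgt hF.
Qed.

Lemma sizeF1 : (3 < size (Fg n U))%N.
Proof.
have h : (n < 2 * n + 2)%N by lia.
have := @sizeF_gt K n U (2 * n + 2) h (Ucoef_top hn c0 ctop); lia.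
Qed.

Lemma sizeF2 : (3 < size (Fg (n + 2) V))%N.
Proof.
have h : (n + 2 < 2 * n + 2)%N by lia.
have := @sizeF_gt K (n + 2) V (2 * n + 2) h (Vcoef_top hn c0 ctop); lia.
Qed.

Lemma XX0 : ('X : PK) + 'X != 0.
Proof.
rewrite -mulr2n -mulr_natr mulf_neq0 // ?polyX_eq0 //.
by rewrite -polyC_natr polyC_eq0 pnatr_eq0.
Qed.

Lemma final_step (Q G1 G2 : PP) :
  Fg n U = Q * G1 -> Fg (n + 2) V = Q * G2 ->
  G1.[('X : PK)] != 0 -> G1.[- ('X : PK)] != 0 -> (size Q <= 3)%N ->
  exists B : PK, B != 0 /\ forall z0 w0 : K,
    z0 ^+ n * U.[w0] = w0 ^+ n * U.[z0] ->
    z0 ^+ (n + 2) * V.[w0] = w0 ^+ (n + 2) * V.[z0] ->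
    (map_poly (horner_eval z0) Q).[w0] != 0 -> B.[z0] = 0.
Proof.
move=> hF1 hF2 hGX hGN hQ.
have R0 := core_resultant (TV n cc) (T0 hn c0 ctop) hF1 hF2 hGX hGN (Fr hn c0 ctop).
have s1 := sizeG_gt1 sizeF1 hQ hF1; have s2 := sizeG_gt1 sizeF2 hQ hF2.
have [[u v] /= _ huv] := resultant_in_ideal s1 s2.
exists (resultant G1 G2); split => // z0 w0 e1 e2 hq.
set phi := map_poly (horner_eval z0).
have g1 : (phi G1).[w0] = 0.
  have := congr1 (fun P => (phi P).[w0]) hF1; rewrite /= evalF e1 subrr.
  rewrite /phi rmorphM /= hornerM => /esym /eqP; rewrite mulf_eq0 (negbTE hq) /=.
  by move/eqP.
have g2 : (phi G2).[w0] = 0.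
  have := congr1 (fun P => (phi P).[w0]) hF2; rewrite /= evalF e2 subrr.
  rewrite /phi rmorphM /= hornerM => /esym /eqP; rewrite mulf_eq0 (negbTE hq) /=.
  by move/eqP.
have := congr1 (fun P => (phi P).[w0]) huv.
rewrite /phi /= map_polyC /= hornerC horner_evalE => ->.
by rewrite rmorphD !rmorphM /= hornerD !hornerM g1 g2 !mulr0 addr0.
Qed.
End Cases.
Section Cases2.
Variable K : numClosedFieldType.
Local Notation PK := {poly K}.
Local Notation PP := {poly {poly K}}.
Variables (n : nat) (cc : nat -> K).
Hypothesis hn : (1 <= n)%N.
Hypothesis c0 : cc 0%N != 0.
Hypothesis ctop : cc (2 * n + 2)%N != 0.
Local Notation U := (Up n cc).
Local Notation V := (Vp n cc).

Lemma sign_diff (j m : nat) : odd (j + m) -> (-1) ^+ j - (-1) ^+ m != 0 :> K.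
Proof.
rewrite oddD -(signr_odd _ j) -(signr_odd _ m).
case: (odd j); case: (odd m) => //= _; rewrite ?expr0 ?expr1 ?opprK.
  by rewrite -opprD oppr_eq0 -mulr2n pnatr_eq0.
by rewrite -mulr2n pnatr_eq0.
Qed.

Lemma sign_same (j m : nat) : ~~ odd (j + m) -> (-1) ^+ j = (-1) ^+ m :> K.
Proof.
rewrite oddD -(signr_odd _ j) -(signr_odd _ m).
by case: (odd j); case: (odd m).
Qed.

Lemma negX_pow m : (- ('X : PK)) ^+ m = ((-1) ^+ m) *: 'X^m.
Proof. by rewrite -scaleN1r exprZn. Qed.

Lemma FN_i : (exists j, (j <= 2 * n + 2)%N /\ odd (j + n) /\ cc j != 0) ->
  (Fg n U).[- ('X : PK)] != 0.
Proof.
case=> j [hj [hod hc]].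
rewrite /Fg !hornerE liftw_horner.
apply/eqP => /(congr1 (fun p : PK => p`_(n + j))).
rewrite coefB coefXnM ifF; last lia.
rewrite negX_pow -scalerAl coefZ coefXnM ifF; last lia.
rewrite (_ : (n + j - n)%N = j); last lia.
rewrite compN_coef coef0 -mulrBl => /eqP; rewrite mulf_eq0 (negbTE (sign_diff hod)) /=.
rewrite /Up coef_poly ifT; last lia.
rewrite mulf_eq0 (negbTE hc) orbF subr_eq0 eqr_nat => /eqP e.
by move: hod; rewrite -e (_ : (n + 2 + n)%N = (n + 1).*2) ?odd_double //; lia.
Qed.

Lemma exc_case1 : (exists j, (j <= 2 * n + 2)%N /\ odd (j + n) /\ cc j != 0) ->
  exists B : PK, B != 0 /\ forall z0 w0 : K,
    z0 ^+ n * U.[w0] = w0 ^+ n * U.[z0] ->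
    z0 ^+ (n + 2) * V.[w0] = w0 ^+ (n + 2) * V.[z0] ->
    w0 != z0 -> B.[z0] = 0.
Proof.
move=> hev.
have [G1 hG1] : exists G, Fg n U = G * ('X - ('X : PK)%:P).
  by apply/factor_theorem; rewrite /root FgX.
have [G2 hG2] : exists G, Fg (n + 2) V = G * ('X - ('X : PK)%:P).
  by apply/factor_theorem; rewrite /root FgX.
have hGX : G1.[('X : PK)] != 0.
  apply/eqP => h; have := I2eval n U 'X.
  rewrite (eval_deriv_factor hG1) h mulr0 FgX mulr0 addr0 comp_polyXr => /esym/eqP.
  rewrite mulf_eq0 (negbTE (T0 hn c0 ctop)) orbF.
  by rewrite (negbTE (monic_neq0 (monicXn _ _))).
have hGN : G1.[- ('X : PK)] != 0.
  have := FN_i hev; rewrite hG1 hornerM mulf_eq0 negb_or => /andP[] //.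
pose Q0 : PP := 'X - ('X : PK)%:P.
have hF1 : Fg n U = Q0 * G1 by rewrite hG1 mulrC.
have hF2 : Fg (n + 2) V = Q0 * G2 by rewrite hG2 mulrC.
have hQ : (size Q0 <= 3)%N by rewrite /Q0 size_XsubC.
have [B [B0 hB]] := final_step hn c0 ctop hF1 hF2 hGX hGN hQ.
exists B; split => // z0 w0 e1 e2 ne; apply: hB e1 e2 _.
rewrite /Q0 map_polyXsubC /= horner_evalE hornerX !hornerE subr_eq0 //.
Qed.
End Cases2.
Section Cases3.
Variable K : numClosedFieldType.
Local Notation PK := {poly K}.
Local Notation PP := {poly {poly K}}.
Variables (n : nat) (cc : nat -> K).
Hypothesis hn : (1 <= n)%N.
Hypothesis c0 : cc 0%N != 0.
Hypothesis ctop : cc (2 * n + 2)%N != 0.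
Hypothesis hodd : forall j, odd (j + n) -> cc j = 0.
Local Notation U := (Up n cc).
Local Notation V := (Vp n cc).

Lemma U_even : U \Po (- 'X) = (-1) ^+ n *: U.
Proof.
apply/polyP => j; rewrite compN_coef coefZ /Up coef_poly.
case: ifP => _; last by rewrite !mulr0.
have [ho|he] := boolP (odd (j + n)); first by rewrite hodd // !mulr0.
by rewrite (@sign_same K _ _ he).
Qed.

Lemma V_even : V \Po (- 'X) = (-1) ^+ (n + 2) *: V.
Proof.
apply/polyP => j; rewrite compN_coef coefZ /Vp coef_poly.
case: ifP => _; last by rewrite !mulr0.
have [ho|he] := boolP (odd (j + n)); first by rewrite hodd // !mulr0.
rewrite (@sign_same K _ _ he) exprD sqrrN expr1n mulr1 //.
Qed.

Lemma Fg_even k (W : PK) : W \Po (- 'X) = (-1) ^+ k *: W -> (Fg k W).[- ('X : PK)] = 0.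
Proof.
move=> e; rewrite /Fg !hornerE liftw_horner e negX_pow.
by rewrite -scalerAl -scalerAr subrr.
Qed.

Lemma exc_case2 :
  exists B : PK, B != 0 /\ forall z0 w0 : K,
    z0 ^+ n * U.[w0] = w0 ^+ n * U.[z0] ->
    z0 ^+ (n + 2) * V.[w0] = w0 ^+ (n + 2) * V.[z0] ->
    w0 != z0 -> w0 != - z0 -> B.[z0] = 0.
Proof.
have XX : - ('X : PK) - 'X != 0 by rewrite -opprD oppr_eq0 XX0.
have step : forall k (W : PK), (Fg k W).[- ('X : PK)] = 0 -> exists G : PP,
    Fg k W = G * ('X - (- ('X : PK))%:P) * ('X - ('X : PK)%:P).
  move=> k W hN.
  have [G' hG'] : exists G, Fg k W = G * ('X - ('X : PK)%:P).
    by apply/factor_theorem; rewrite /root FgX.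
  have : root G' (- 'X).
    move: hN; rewrite hG' hornerM => /eqP; rewrite mulf_eq0 !hornerE (negbTE XX) orbF.
    by [].
  case/factor_theorem => G hG; exists G; by rewrite hG' hG.
have [G1 hG1] := step _ _ (Fg_even U_even).
have [G2 hG2] := step _ _ (Fg_even V_even).
pose Q0 : PP := ('X - (- ('X : PK))%:P) * ('X - ('X : PK)%:P).
have hF1 : Fg n U = Q0 * G1 by rewrite hG1 /Q0 -mulrA mulrC.
have hF2 : Fg (n + 2) V = Q0 * G2 by rewrite hG2 /Q0 -mulrA mulrC.
have hQ : (size Q0 <= 3)%N.
  by rewrite /Q0 size_mul ?size_XsubC // -size_poly_eq0 size_XsubC.
have hGX : G1.[('X : PK)] != 0.
  apply/eqP => h; have := I2eval n U 'X.
  rewrite (eval_deriv_factor (G := G1 * ('X - (- ('X : PK))%:P)) hG1).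
  rewrite hornerM h !mul0r mulr0 FgX mulr0 addr0 comp_polyXr => /esym/eqP.
  rewrite mulf_eq0 (negbTE (T0 hn c0 ctop)) orbF.
  by rewrite (negbTE (monic_neq0 (monicXn _ _))).
have hGN : G1.[- ('X : PK)] != 0.
  apply/eqP => h; have := I2eval n U (- 'X).
  have e : Fg n U = G1 * ('X - ('X : PK)%:P) * ('X - (- ('X : PK))%:P) by rewrite hG1 mulrAC.
  rewrite (eval_deriv_factor e) hornerM h !mul0r mulr0 (Fg_even U_even) mulr0 addr0 => /esym/eqP.
  rewrite mulf_eq0 (negbTE (monic_neq0 (monicXn _ _))) /= -size_poly_eq0 size_comp_poly2.
    by rewrite size_poly_eq0 (negbTE (T0 hn c0 ctop)).
  by rewrite size_polyN size_polyX.
have [B [B0 hB]] := final_step hn c0 ctop hF1 hF2 hGX hGN hQ.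
exists B; split => // z0 w0 e1 e2 ne1 ne2; apply: hB e1 e2 _.
rewrite /Q0 rmorphM /= !map_polyXsubC /= !horner_evalE !hornerE mulf_neq0 //.
  by rewrite subr_eq0.
by rewrite subr_eq0.
Qed.
End Cases3.

Unset Implicit Arguments.

Local Ltac simpc := do ?
  [ rewrite -[Complex _ _ - Complex _ _]/(Complex _ _)
  | rewrite -[Complex _ _ + Complex _ _]/(Complex _ _)
  | rewrite -[- Complex _ _]/(Complex _ _)
  | rewrite -[Complex _ _ * Complex _ _]/(Complex _ _)].

Lemma natC (k : nat) : (k%:R : R[i]) = Complex (k%:R) 0.
Proof. by rewrite -(rmorph_nat (real_complex R)). Qed.

Lemma Epow (th : R) (j : nat) :
  (Complex (cos th) (sin th)) ^+ j = Complex (cos (INR j * th)) (sin (INR j * th)).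
Proof.
elim: j => [|j IH].
  by rewrite expr0 /= Rmult_0_l cos_0 sin_0.
rewrite exprS IH; simpc.
rewrite S_INR Rmult_plus_distr_r Rmult_1_l Rplus_comm cos_plus sin_plus.
by congr Complex; rewrite addrC.
Qed.

Lemma Ecomp (th : R) : Complex (cos th) (sin th) * Complex (cos th) (- sin th) = 1.
Proof.
simpc; rewrite /GRing.one /=; congr Complex.
  by have h := sin2_cos2 th; rewrite /Rsqr in h; rewrite addrC; exact: h.
ring.
Qed.

Lemma perk (A B C S M : R) :
  (1 - Complex M 0) * Complex (A / 2) (- (B / 2)) * Complex C S
  + (1 + Complex M 0) * Complex (A / 2) (B / 2) * Complex C (- S)
  = Complex (A * C + B * S) (M * (B * C - A * S)).
Proof.
have e1 : (1 : R[i]) = Complex 1 0 by [].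
by rewrite e1; simpc; congr Complex; field.
Qed.
Lemma perk2 (A B C S M : R) :
  (1 + Complex M 0) * Complex (A / 2) (- (B / 2)) * Complex C S
  + (1 - Complex M 0) * Complex (A / 2) (B / 2) * Complex C (- S)
  = Complex (A * C + B * S) (- (M * (B * C - A * S))).
Proof.
have e1 : (1 : R[i]) = Complex 1 0 by [].
by rewrite e1; simpc; congr Complex; field.
Qed.

Lemma sum_reindex (V : nmodType) (N : nat) (g : nat -> V) :
  \sum_(j < 2 * N + 1) g j = g N + \sum_(k < N) (g (N + k.+1)%N + g (N - k.+1)%N).
Proof.
elim: N g => [|N IH] g; first by rewrite big_ord1 big_ord0 addr0.
rewrite (_ : (2 * N.+1 + 1 = (2 * N + 1).+2)%N); last lia.
rewrite big_ord_recl big_ord_recr /= (IH (fun j => g (bump 0 j))) big_ord_recr /=.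
rewrite /bump !leq0n !add1n.
under eq_bigr => i _ do rewrite !leq0n !add1n.
rewrite (_ : (N.+1 + N.+1 = (2 * N + 1).+1)%N); last lia.
rewrite subnn.
have -> : \sum_(i < N) (g (N + i.+1).+1 + g (N - i.+1).+1) =
          \sum_(i < N) (g (N.+1 + i.+1)%N + g (N.+1 - i.+1)%N).
  apply: eq_bigr => i _; congr (g _ + g _); have := ltn_ord i; lia.
by rewrite [LHS]addrC -!addrA.
Qed.

Lemma sum_f1E (N : nat) (f : nat -> R) : (0 < N)%N -> sum_f 1 N f = \sum_(k < N) f k.+1.
Proof.
rewrite /sum_f sum_f_R0E; case: N => // n _.
rewrite (_ : (n.+1 - 1)%coq_nat = n); last by rewrite Nat.sub_succ Nat.sub_0_r.
rewrite big_mkord; apply: eq_bigr => k _; by rewrite Nat.add_1_r.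
Qed.

Lemma csum (N : nat) (F G : nat -> R) :
  \sum_(k < N) Complex (F k) (G k) = Complex (\sum_(k < N) F k) (\sum_(k < N) G k).
Proof.
elim: N => [|N IH]; first by rewrite !big_ord0.
by rewrite !big_ord_recr /= IH; simpc.
Qed.
Definition ccf (N : nat) (a b : nat -> R) (j : nat) : R[i] :=
  if (j < N)%N then Complex (a (N - j)%N / 2) (b (N - j)%N / 2)
  else if j == N then Complex (a 0%N) 0
  else if (j <= 2 * N)%N then Complex (a (j - N)%N / 2) (- (b (j - N)%N / 2))
  else 0.

Lemma ccf_hi N a b m : (0 < m)%N -> (m <= N)%N ->
  ccf N a b (N + m) = Complex (a m / 2) (- (b m / 2)).
Proof.
move=> h1 h2; rewrite /ccf ifF; last lia.
rewrite ifF; last by apply/negbTE; apply/eqP; lia.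
by rewrite ifT ?addKn //; lia.
Qed.

Lemma ccf_lo N a b m : (0 < m)%N -> (m <= N)%N ->
  ccf N a b (N - m) = Complex (a m / 2) (b m / 2).
Proof.
move=> h1 h2; rewrite /ccf ifT; last lia.
by rewrite subKn.
Qed.

Lemma ccf_mid N a b : ccf N a b N = Complex (a 0%N) 0.
Proof. by rewrite /ccf ltnn eqxx. Qed.

Lemma Epow_sub (th : R) (N m : nat) : (m <= N)%N ->
  (Complex (cos th) (sin th)) ^+ (N - m) =
  (Complex (cos th) (sin th)) ^+ N * Complex (cos (INR m * th)) (- sin (INR m * th)).
Proof.
move=> h; rewrite -{2}(subnK h) exprD (Epow th m) -mulrA Ecomp mulr1 //.
Qed.

Lemma Epow_add (th : R) (N m : nat) :
  (Complex (cos th) (sin th)) ^+ (N + m) =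
  (Complex (cos th) (sin th)) ^+ N * Complex (cos (INR m * th)) (sin (INR m * th)).
Proof. by rewrite exprD (Epow th m). Qed.

Lemma cplx_p (n : nat) (a b : nat -> R) (th : R) :
  Complex (trig_poly n.+1 a b th) (dtrig n.+1 a b th) =
  Complex (a 0%N) 0 + \sum_(k < n.+1) Complex
    (a k.+1 * cos (INR k.+1 * th) + b k.+1 * sin (INR k.+1 * th))%R
    (INR k.+1 * (b k.+1 * cos (INR k.+1 * th) - a k.+1 * sin (INR k.+1 * th)))%R.
Proof.
have := csum n.+1 (fun k => (a k.+1 * cos (INR k.+1 * th) + b k.+1 * sin (INR k.+1 * th))%R)
  (fun k => (INR k.+1 * (b k.+1 * cos (INR k.+1 * th) - a k.+1 * sin (INR k.+1 * th)))%R).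
move=> h; cbv beta in h; rewrite h.
rewrite /trig_poly /dtrig !sum_f1E //; simpc.
by congr Complex; rewrite ?add0r.
Qed.

Lemma gammaA (n : nat) (a b : nat -> R) (th : R) :
  (Complex (cos th) (sin th)) ^+ n *
    Complex (gamma_curve n.+1 a b th).1 (gamma_curve n.+1 a b th).2
  = (Up n (ccf n.+1 a b)).[Complex (cos th) (sin th)].
Proof.
set E := Complex (cos th) (sin th).
rewrite /gamma_curve Derive_trig /=.
rewrite (_ : Complex _ _ = Complex (trig_poly n.+1 a b th) (dtrig n.+1 a b th) * E); last by [].
rewrite [_ * E]mulrC mulrA -exprSr cplx_p mulrDr mulr_sumr.
rewrite /Up horner_poly (_ : (2 * n + 3 = 2 * n.+1 + 1)%N); last lia.
rewrite (@sum_reindex _ n.+1 (fun j : nat => ((n + 2)%:R - j%:R) * ccf n.+1 a b j * E ^+ j)) ccf_mid.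
have e : ((n + 2)%:R - n.+1%:R : R[i]) = 1 by rewrite natrD; ring.
rewrite e mul1r [E ^+ _ * _]mulrC; congr (_ + _).
apply: eq_bigr => k _.
have hk : (k.+1 <= n.+1)%N by have := ltn_ord k.
rewrite ccf_hi // ccf_lo // Epow_add Epow_sub //.
have e1 : ((n + 2)%:R - (n.+1 + k.+1)%:R : R[i]) = 1 - Complex (INR k.+1) 0.
  by rewrite INRE -natC !natrD; ring.
have e2 : ((n + 2)%:R - (n.+1 - k.+1)%:R : R[i]) = 1 + Complex (INR k.+1) 0.
  by rewrite INRE -natC natrB // natrD; ring.
rewrite e1 e2.
transitivity (E ^+ n.+1 * ((1 - Complex (INR k.+1) 0) * Complex (a k.+1 / 2) (- (b k.+1 / 2))
   * Complex (cos (INR k.+1 * th)) (sin (INR k.+1 * th))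
  + (1 + Complex (INR k.+1) 0) * Complex (a k.+1 / 2) (b k.+1 / 2)
   * Complex (cos (INR k.+1 * th)) (- sin (INR k.+1 * th)))); last by ring.
by rewrite perk.
Qed.

Lemma gammaB (n : nat) (a b : nat -> R) (th : R) :
  (Complex (cos th) (sin th)) ^+ (n + 2) *
    Complex (gamma_curve n.+1 a b th).1 (- (gamma_curve n.+1 a b th).2)
  = (Vp n (ccf n.+1 a b)).[Complex (cos th) (sin th)].
Proof.
set E := Complex (cos th) (sin th).
rewrite /gamma_curve Derive_trig /=.
rewrite (_ : Complex _ _ = Complex (trig_poly n.+1 a b th) (- dtrig n.+1 a b th)
   * Complex (cos th) (- sin th)); last first.
  simpc; rewrite ?(RplusE, RminusE, RmultE, RoppE); congr Complex; ring.
have eE : E ^+ (n + 2) * (Complex (trig_poly n.+1 a b th) (- dtrig n.+1 a b th)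
   * Complex (cos th) (- sin th)) = E ^+ n.+1 * Complex (trig_poly n.+1 a b th) (- dtrig n.+1 a b th).
  rewrite addn2 exprSr -[RHS]mulr1 -(Ecomp th) /E; ring.
rewrite eE.
have hp : Complex (trig_poly n.+1 a b th) (- dtrig n.+1 a b th) =
  Complex (a 0%N) 0 + \sum_(k < n.+1) Complex
    (a k.+1 * cos (INR k.+1 * th) + b k.+1 * sin (INR k.+1 * th))%R
    (- (INR k.+1 * (b k.+1 * cos (INR k.+1 * th) - a k.+1 * sin (INR k.+1 * th))))%R.
  have := csum n.+1 (fun k => (a k.+1 * cos (INR k.+1 * th) + b k.+1 * sin (INR k.+1 * th))%R)
    (fun k => (- (INR k.+1 * (b k.+1 * cos (INR k.+1 * th) - a k.+1 * sin (INR k.+1 * th))))%R).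
  move=> h; cbv beta in h; rewrite h.
  rewrite /trig_poly /dtrig !sum_f1E //; simpc.
  by congr Complex; rewrite ?add0r sumrN.
rewrite hp mulrDr mulr_sumr.
rewrite /Vp horner_poly (_ : (2 * n + 3 = 2 * n.+1 + 1)%N); last lia.
rewrite (@sum_reindex _ n.+1 (fun j : nat => (j%:R - n%:R) * ccf n.+1 a b j * E ^+ j)) ccf_mid.
have e : (n.+1%:R - n%:R : R[i]) = 1 by ring.
rewrite e mul1r [E ^+ _ * _]mulrC; congr (_ + _).
apply: eq_bigr => k _.
have hk : (k.+1 <= n.+1)%N by have := ltn_ord k.
rewrite ccf_hi // ccf_lo // Epow_add Epow_sub //.
have e1 : ((n.+1 + k.+1)%:R - n%:R : R[i]) = 1 + Complex (INR k.+1) 0.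
  by rewrite INRE -natC natrD; ring.
have e2 : ((n.+1 - k.+1)%:R - n%:R : R[i]) = 1 - Complex (INR k.+1) 0.
  by rewrite INRE -natC natrB //; ring.
rewrite e1 e2.
transitivity (E ^+ n.+1 * ((1 + Complex (INR k.+1) 0) * Complex (a k.+1 / 2) (- (b k.+1 / 2))
   * Complex (cos (INR k.+1 * th)) (sin (INR k.+1 * th))
  + (1 - Complex (INR k.+1) 0) * Complex (a k.+1 / 2) (b k.+1 / 2)
   * Complex (cos (INR k.+1 * th)) (- sin (INR k.+1 * th)))); last by ring.
by rewrite perk2.
Qed.

Definition Ept (t : R) : R[i] := Complex (cos (th_of t)) (sin (th_of t)).
Definition tinv (z : R[i]) : R := let: Complex x y := z in Rdiv y (Rplus 1 x).

Lemma tinv_E t : tinv (Ept t) = t.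
Proof. exact: inv_formula. Qed.

Lemma Ept_inj s t : Ept s = Ept t -> s = t.
Proof. by case => hc hs; apply: eq_from_cs. Qed.

Lemma Ept_neg s t : Ept s = - Ept t -> t <> 0%R /\ s = (- / t)%R.
Proof.
rewrite /Ept; simpc; case => hc hs; exact: neg_from_cs.
Qed.

Lemma Ept_negt t : t <> 0%R -> Ept (- / t)%R = - Ept t.
Proof. by move=> t0; rewrite /Ept /th_of neg_cos // neg_sin //; simpc. Qed.

Lemma Ept_neq0 t : Ept t != 0.
Proof.
apply/eqP => h; have := Ecomp (th_of t); rewrite -/(Ept t) h mul0r => /eqP.
by rewrite eq_sym oner_eq0.
Qed.

Lemma fiberA n a b s t : Pcurve n.+1 a b s = Pcurve n.+1 a b t ->
  (Ept t) ^+ n * (Up n (ccf n.+1 a b)).[Ept s] = (Ept s) ^+ n * (Up n (ccf n.+1 a b)).[Ept t].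
Proof.
move=> hP; rewrite /Ept -!gammaA.
change (gamma_curve n.+1 a b (th_of s)) with (Pcurve n.+1 a b s).
change (gamma_curve n.+1 a b (th_of t)) with (Pcurve n.+1 a b t).
rewrite hP; ring.
Qed.

Lemma fiberB n a b s t : Pcurve n.+1 a b s = Pcurve n.+1 a b t ->
  (Ept t) ^+ (n + 2) * (Vp n (ccf n.+1 a b)).[Ept s] =
  (Ept s) ^+ (n + 2) * (Vp n (ccf n.+1 a b)).[Ept t].
Proof.
move=> hP; rewrite /Ept -!gammaB.
change (gamma_curve n.+1 a b (th_of s)) with (Pcurve n.+1 a b s).
change (gamma_curve n.+1 a b (th_of t)) with (Pcurve n.+1 a b t).
rewrite hP; ring.
Qed.

Lemma In_of_mem (x : R) (l : seq R) : x \in l -> In x l.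
Proof.
elim: l => [|y l IH] //; rewrite inE => /orP [/eqP ->|h]; [by left | by right; apply: IH].
Qed.

Lemma root_of_B (B : {poly R[i]}) rs z : B != 0 ->
  B = lead_coef B *: \prod_(x <- rs) ('X - x%:P) -> B.[z] = 0 -> z \in rs.
Proof.
move=> B0 hrs hz; move: hz; rewrite hrs hornerZ => /eqP.
by rewrite mulf_eq0 lead_coef_eq0 (negbTE B0) /= -root_prod_XsubC.
Qed.

Lemma pair_of_cplx (p q : R * R) : Complex p.1 p.2 = Complex q.1 q.2 -> p = q.
Proof. by case: p q => [x y] [x' y'] /= [-> ->]. Qed.

Lemma Pneg n a b t : (forall j, odd (j + n) -> ccf n.+1 a b j = 0) -> t <> 0%R ->
  Pcurve n.+1 a b (- / t)%R = Pcurve n.+1 a b t.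
Proof.
move=> hodd t0; apply: pair_of_cplx.
have hA := gammaA n a b (th_of (- / t)%R); have hA' := gammaA n a b (th_of t).
rewrite -/(Ept (- / t)%R) in hA; rewrite -/(Ept t) in hA'; rewrite Ept_negt // in hA.
change (gamma_curve n.+1 a b (th_of (- / t)%R)) with (Pcurve n.+1 a b (- / t)%R) in hA.
change (gamma_curve n.+1 a b (th_of t)) with (Pcurve n.+1 a b t) in hA'.
have e : (Up n (ccf n.+1 a b)).[- Ept t] = (-1) ^+ n * (Up n (ccf n.+1 a b)).[Ept t].
  by rewrite -hornerZ -(U_even hodd) horner_comp !hornerE.
rewrite e -hA' [(- Ept t) ^+ n]exprNn -!mulrA in hA.
have s0 : ((-1) ^+ n : R[i]) != 0 by rewrite signr_eq0.
have := mulfI s0 hA; apply: mulfI; exact: expf_neq0 (Ept_neq0 t).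
Qed.
Lemma cplx_neq0 (x y : R) : (x != 0) || (y != 0) -> Complex x y != 0.
Proof.
move=> h; apply/eqP => e; rewrite -[0 : R[i]]/(Complex 0 0) in e; case: e => hx hy.
by move: h; rewrite hx hy eqxx.
Qed.

Lemma half_neq0 (x : R) : x <> 0%R -> x / 2 != 0 :> R.
Proof.
move=> h; rewrite mulf_neq0 // ?invr_eq0 ?pnatr_eq0 //; exact/eqP.
Qed.

Lemma even_ex m : ~~ odd m -> exists k, m = (2 * k)%N.
Proof.
move=> h; exists m./2; rewrite mul2n; have := odd_double_half m.
by rewrite (negbTE h) add0n.
Qed.

Theorem main_thm (N : nat) (a b : nat -> R)
  (hN : (2 <= N)%coq_nat) (hdeg : a N <> 0%R \/ b N <> 0%R) :
  (((exists k : nat, (2 * k <= N)%coq_nat /\ a (2 * k)%coq_nat <> 0%R) \/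
    (exists k : nat, (1 <= k)%coq_nat /\ (2 * k <= N)%coq_nat /\ b (2 * k)%coq_nat <> 0%R)) ->
   traces_times N a b 1%nat)
  /\
  ((forall k : nat, (2 * k <= N)%coq_nat -> a (2 * k)%coq_nat = 0%R) ->
   (forall k : nat, (1 <= k)%coq_nat -> (2 * k <= N)%coq_nat -> b (2 * k)%coq_nat = 0%R) ->
   traces_times N a b 2%nat).
Proof.
case: N hN hdeg => [|n] hN hdeg; first lia.
have hn : (0 < n)%N by lia.
have c0 : ccf n.+1 a b 0 != 0.
  rewrite /ccf /= subn0; apply: cplx_neq0.
  by case: hdeg => h; apply/orP; [left|right]; apply: half_neq0.
have ctop : ccf n.+1 a b (2 * n + 2) != 0.
  rewrite (_ : (2 * n + 2 = n.+1 + n.+1)%N); last lia.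
  rewrite ccf_hi //; apply: cplx_neq0.
  case: hdeg => h; apply/orP; [left|right]; first exact: half_neq0.
  by rewrite oppr_eq0; apply: half_neq0.
split.
- move=> hyp.
  have hev : exists j, (j <= 2 * n + 2)%N /\ odd (j + n) /\ ccf n.+1 a b j != 0.
    case: hyp => [[k [hk ha]] | [k [hk1 [hk hb]]]].
    + case: k hk ha => [|k] hk ha.
      * exists n.+1; split; first lia.
        split; first by rewrite addSn /= addnn odd_double.
        by rewrite ccf_mid; apply: cplx_neq0; apply/orP; left; apply/eqP.
      * exists (n.+1 + 2 * k.+1)%N; split; first lia.
        split.
          by rewrite (_ : (n.+1 + 2 * k.+1 + n = (n + k.+1).*2.+1)%N) ?odd_double //; lia.
        rewrite ccf_hi //; try lia.
        by apply: cplx_neq0; apply/orP; left; apply: half_neq0.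
    + exists (n.+1 + 2 * k)%N; split; first lia.
      split.
        by rewrite (_ : (n.+1 + 2 * k + n = (n + k).*2.+1)%N) ?odd_double //; lia.
      rewrite ccf_hi //; try lia.
      by apply: cplx_neq0; apply/orP; right; rewrite oppr_eq0; apply: half_neq0.
  have [B [B0 hB]] := exc_case1 hn c0 ctop hev.
  have [rs hrs] := closed_field_poly_normal B.
  split; first lia.
  exists (map tinv rs) => t ht.
  exists (t :: nil); split; first by constructor; [by [] | constructor].
  split; first by [].
  move=> s; split; last by case => [<-|[]].
  move=> hP; left.
  case: (Req_dec t s) => // hst; exfalso; apply: ht.
  have ne : Ept s != Ept t by apply/eqP => /Ept_inj e; apply: hst; rewrite e.
  have hz := hB (Ept t) (Ept s) (fiberA n a b s t hP) (fiberB n a b s t hP) ne.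
  rewrite -(tinv_E t); apply: In_of_mem; apply: map_f; exact: root_of_B B0 hrs hz.
- move=> ha hb.
  have hodd : forall j, odd (j + n) -> ccf n.+1 a b j = 0.
    move=> j hj; rewrite /ccf.
    case: ifP => hlt.
      have [k hk] : exists k, (n.+1 - j = 2 * k)%N.
        apply: even_ex; move: hj; rewrite oddD oddB ?oddS; last lia.
        by case: (odd j); case: (odd n).
      have k1 : (1 <= k)%N by lia.
      have k2 : (2 * k <= n.+1)%coq_nat by lia.
      by rewrite hk (ha k k2) (hb k (ltac:(lia)) k2) !mul0r.
    case: ifP => [/eqP hj0|hne].
      by rewrite (ha 0%N (ltac:(lia))).
    case: ifP => hle //.
    have [k hk] : exists k, (j - n.+1 = 2 * k)%N.
      apply: even_ex; move: hj; rewrite oddD oddB ?oddS; last lia.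
      by case: (odd j); case: (odd n).
    have k1 : (1 <= k)%N by move/negbT: hne; move/negbT: hlt; lia.
    have k2 : (2 * k <= n.+1)%coq_nat by lia.
    by rewrite hk (ha k k2) (hb k (ltac:(lia)) k2) !mul0r oppr0.
  have [B [B0 hB]] := exc_case2 hn c0 ctop hodd.
  have [rs hrs] := closed_field_poly_normal B.
  split; first lia.
  exists (0%R :: map tinv rs) => t ht.
  have t0 : t <> 0%R by move=> e; apply: ht; left.
  exists (t :: (- / t)%R :: nil); split.
    constructor.
      by move=> /= [e|[]]; exact: (t_neq_neginv t t0 e).
    by constructor; [by [] | constructor].
  split; first by [].
  move=> s; split.
  + move=> hP.
    case: (Req_dec t s) => [e|hst]; first by left.
    case: (Req_dec (- / t)%R s) => [e|hst2]; first by right; left.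
    exfalso; apply: ht; right.
    have ne1 : Ept s != Ept t by apply/eqP => /Ept_inj e; apply: hst; rewrite e.
    have ne2 : Ept s != - Ept t by apply/eqP => /Ept_neg [_ e]; apply: hst2; rewrite e.
    have hz := hB (Ept t) (Ept s) (fiberA n a b s t hP) (fiberB n a b s t hP) ne1 ne2.
    rewrite -(tinv_E t); apply: In_of_mem; apply: map_f; exact: root_of_B B0 hrs hz.
  + case => [<-|[<-|[]]] //; exact: Pneg hodd t0.
Qed.

Local Close Scope ring_scope.
Local Open Scope R_scope.

Theorem lemma2p3 (N : nat) (a b : nat -> R)
  (hN : (2 <= N)%coq_nat) (hdeg : a N <> 0 \/ b N <> 0) :
  (((exists k : nat, (2 * k <= N)%coq_nat /\ a (2 * k)%coq_nat <> 0) \/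
    (exists k : nat, (1 <= k)%coq_nat /\ (2 * k <= N)%coq_nat /\ b (2 * k)%coq_nat <> 0)) ->
   traces_times N a b 1%nat)
  /\
  ((forall k : nat, (2 * k <= N)%coq_nat -> a (2 * k)%coq_nat = 0) ->
   (forall k : nat, (1 <= k)%coq_nat -> (2 * k <= N)%coq_nat -> b (2 * k)%coq_nat = 0) ->
   traces_times N a b 2%nat).
Proof. exact: main_thm. Qed.
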